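(* There is an absolute constant $C>0$ such that for every $n\in\mathbb N$, all points $z_1,\dots,z_n\in\mathbb T$ and all $\alpha_1,\dots,\alpha_n>0$, the measure $\nu=\sum_{k=1}^n\alpha_k\delta_{z_k}$ satisfies $$\|\mathcal C\nu\|_{L^1(\mathbb D)}\ \ge\ C\,\frac{\sum_{k=1}^n\alpha_k^2}{\|\nu\|},$$ where $\|\nu\|=\sum_{k=1}^n\alpha_k$ is the total variation of $\nu$.
   Context: $\mathbb D$ is the open unit disc in $\mathbb C$, $\mathbb T=\partial\mathbb D$ the unit circle, and $L^1(\mathbb D)$ is taken with respect to planar Lebesgue measure $m$. For a measure $\mu$ on $\overline{\mathbb D}$, its Cauchy transform is $\mathcal C\mu(z)=\int\frac{d\mu(\xi)}{\xi-z}$ for $|z|<1$; thus $\mathcal C\nu(z)=\sum_{k=1}^n\frac{\alpha_k}{z_k-z}$. $\delta_{z}$ denotes the Dirac measure at $z$. *)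

(* Defs.v *)
From HB Require Import structures.
From mathcomp Require Import all_boot all_order all_algebra.
From mathcomp Require Import all_classical all_reals all_analysis.
From mathcomp Require Import complex.
Set Implicit Arguments. Unset Strict Implicit. Unset Printing Implicit Defensive.
Import Order.TTheory GRing.Theory Num.Theory.
Local Open Scope ring_scope.
Local Open Scope complex_scope.

Definition cplx (R : realType) (p : R * R) : R[i] := (p.1 +i* p.2)%C.

Definition unit_disc (R : realType) : set (R * R) :=
  [set p | p.1 ^+ 2 + p.2 ^+ 2 < 1].

(* Cauchy transform of nu = sum_k alpha_k delta_{z_k}, evaluated at w. *)
Definition cauchy_atomic (R : realType) (n : nat) (z : 'I_n -> R[i])
  (alpha : 'I_n -> R) (w : R[i]) : R[i] :=
  \sum_(k < n) (alpha k)%:C / (z k - w).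

Definition L1_disc_norm_cauchy (R : realType) (n : nat) (z : 'I_n -> R[i])
  (alpha : 'I_n -> R) : \bar R :=
  (\int[(product_measure1 (@lebesgue_measure R) (@lebesgue_measure R))]_(p in @unit_disc R)
     (ComplexField.Normc.normc (cauchy_atomic z alpha (cplx p)))%:E)%E.

(* Main.v *)
Require Import Defs.
From HB Require Import structures.
From mathcomp Require Import all_boot all_order all_algebra.
From mathcomp Require Import all_classical all_reals all_analysis.
From mathcomp Require Import complex.
From mathcomp Require Import measurable_realfun.
From mathcomp Require Import ring lra.
Import Order.TTheory GRing.Theory Num.Theory.
Import numFieldNormedType.Exports.
Local Open Scope ring_scope.

Local Open Scope classical_set_scope.
Section mono.
Local Open Scope ereal_scope.
Context d (T : measurableType d) (R : realType).
Variable mu : {measure set T -> \bar R}.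
Import HBNNSimple.

Lemma my_le_integral (h1 h2 : T -> \bar R) :
  (forall x, 0 <= h1 x) -> measurable_fun setT h1 ->
  (forall x, h1 x <= h2 x) ->
  \int[mu]_x h1 x <= \int[mu]_x h2 x.
Proof.
move=> h10 mh1 h12.
have h20 x : 0 <= h2 x by exact: le_trans (h10 x) (h12 x).
pose g1 := nnsfun_approx measurableT mh1.
rewrite (@nd_ge0_integral_lim _ _ _ _ _ g1)//; last 2 first.
  by move=> x m n mn; exact/lefP/nd_nnsfun_approx.
  by move=> x; exact: cvg_nnsfun_approx.
apply: lime_le.
  by apply: is_cvg_sintegral => // t m n mn; exact/lefP/nd_nnsfun_approx.
near=> n; rewrite ge0_integralTE//; apply: ereal_sup_ubound => /=.
exists (g1 n) => // t; rewrite (le_trans _ (h12 _))//.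
have := leey (h1 t); rewrite le_eqVlt => /predU1P[->|ftoo].
  by rewrite leey.
have h1tfin : h1 t \is a fin_num.
  by rewrite fin_numE gt_eqF/= ?lt_eqF// (lt_le_trans _ (h10 t)).
have /= := @cvg_nnsfun_approx _ _ _ _ measurableT _ mh1 (fun x _ => h10 x) t Logic.I.
rewrite -(fineK h1tfin) => /fine_cvgP[ft_near].
set u_ := (X in X --> _) => u_h1.
have <- : lim u_ = fine (h1 t) by exact/cvg_lim.
rewrite lee_fin; apply: nondecreasing_cvgn_le.
  by move=> // a b ab; rewrite /u_ /=; exact/lefP/nd_nnsfun_approx.
by apply/cvg_ex; eexists; exact: u_h1.
Unshelve. all: by end_near. Qed.
End mono.

Section alg.
Local Open Scope complex_scope.
Variable R : rcfType.
Implicit Types a b x y u v : R.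

Lemma cB a b x y : (a +i* b) - (x +i* y) = (a - x) +i* (b - y) :> R[i].
Proof. by []. Qed.
Lemma cV u v : (u +i* v)^-1 = (u / (u^+2 + v^+2)) +i* (- (v / (u^+2 + v^+2))) :> R[i].
Proof. by []. Qed.
Lemma cM a b x y : (a +i* b) * (x +i* y) = (a * x - b * y) +i* (a * y + b * x) :> R[i].
Proof. by []. Qed.
Lemma cR a : a%:C = a +i* 0 :> R[i].
Proof. by []. Qed.

Lemma Re_sum n (F : 'I_n -> R[i]) : complex.Re (\sum_(k < n) F k) = \sum_(k < n) complex.Re (F k).
Proof.
elim: n F => [|n IH] F.
  rewrite !big_ord0. reflexivity.
have ReD (u v : R[i]) : complex.Re (u + v) = complex.Re u + complex.Re v.
  by case: u; case: v.
by rewrite !big_ord_recr ReD IH.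
Qed.

Lemma Re_le_normc (v : R[i]) : complex.Re v <= ComplexField.Normc.normc v.
Proof.
case: v => c d /=.
apply: (le_trans (ler_norm c)).
rewrite -sqrtr_sqr; apply: ler_wsqrtr.
by rewrite lerDl sqr_ge0.
Qed.

Lemma term_Re (al a b x y : R) : (a - x)^+2 + (b - y)^+2 != 0 ->
  complex.Re ((x +i* y) * (al%:C / ((a +i* b) - (x +i* y)))) =
  al * (x * (a - x) + y * (b - y)) / ((a - x)^+2 + (b - y)^+2).
Proof.
move=> n0.
rewrite cB cV cR; rewrite [X in complex.Re X]/GRing.mul /=.
by field.
Qed.
End alg.

Lemma geo (R : realFieldType) (a b x y h : R) : a^+2 + b^+2 = 1 -> 0 < h -> h <= 1/12 ->
  (1 - 2*h) * a - h <= x <= (1 - 2*h) * a + h ->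
  (1 - 2*h) * b - h <= y <= (1 - 2*h) * b + h ->
  x^+2 + y^+2 <= 1 - h /\ (a - x)^+2 + (b - y)^+2 <= 12 * h^+2.
Proof.
move=> ab h0 h12 /andP[x1 x2] /andP[y1 y2].
set d1 := x - (1 - 2*h) * a; set d2 := y - (1 - 2*h) * b.
have hd1 : d1^+2 <= h^+2.
  have p1 : 0 <= h - d1 by rewrite /d1; lra.
  have p2 : 0 <= h + d1 by rewrite /d1; lra.
  have := mulr_ge0 p1 p2; nra.
have hd2 : d2^+2 <= h^+2.
  have p1 : 0 <= h - d2 by rewrite /d2; lra.
  have p2 : 0 <= h + d2 by rewrite /d2; lra.
  have := mulr_ge0 p1 p2; nra.
have cs : (a * d1 + b * d2)^+2 <= 2 * h^+2.
  have : (a * d1 + b * d2)^+2 + (a * d2 - b * d1)^+2 = (a^+2 + b^+2) * (d1^+2 + d2^+2) by ring.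
  rewrite ab mul1r => e; have := sqr_ge0 (a * d2 - b * d1); lra.
move: cs; set s := a * d1 + b * d2 => cs.
have hs : 2 * s <= 3 * h.
  rewrite leNgt; apply/negP => H.
  have H1 : 0 < 2 * s - 3 * h by lra.
  have H2 : 0 < 2 * s + 3 * h by lra.
  have := mulr_gt0 H1 H2.
  have -> : (2 * s - 3 * h) * (2 * s + 3 * h) = 4 * s^+2 - 9 * h^+2 by ring.
  have := sqr_ge0 h; lra.
have hs' : - (3 * h) <= 2 * s.
  rewrite leNgt; apply/negP => H.
  have H1 : 0 < - 2 * s - 3 * h by lra.
  have H2 : 0 < - 2 * s + 3 * h by lra.
  have := mulr_gt0 H1 H2.
  have -> : (- 2 * s - 3 * h) * (- 2 * s + 3 * h) = 4 * s^+2 - 9 * h^+2 by ring.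
  have := sqr_ge0 h; lra.
have ex : x = (1 - 2*h) * a + d1 by rewrite /d1; ring.
have ey : y = (1 - 2*h) * b + d2 by rewrite /d2; ring.
rewrite ex ey; split.
- have -> : ((1 - 2 * h) * a + d1) ^+ 2 + ((1 - 2 * h) * b + d2) ^+ 2
     = (1 - 2*h)^+2 * (a^+2 + b^+2) + 2 * (1 - 2*h) * (a * d1 + b * d2) + (d1^+2 + d2^+2) by ring.
  rewrite ab -/s.
  have p1 : 0 <= 1 - 2 * h by lra.
  have p2 : 0 <= 3 * h - 2 * s by lra.
  have := mulr_ge0 p1 p2.
  have -> : (1 - 2 * h) * (3 * h - 2 * s) = 3 * h - 6 * h^+2 - 2 * (1 - 2 * h) * s by ring.
  have -> : (1 - 2 * h) ^+ 2 * 1 = 1 - 4 * h + 4 * h^+2 by ring.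
  lra.
- have -> : (a - ((1 - 2 * h) * a + d1)) ^+ 2 + (b - ((1 - 2 * h) * b + d2)) ^+ 2
     = 4 * h^+2 * (a^+2 + b^+2) - 4 * h * (a * d1 + b * d2) + (d1^+2 + d2^+2) by ring.
  rewrite ab -/s.
  have p1 : 0 <= h by lra.
  have p2 : 0 <= 3 * h + 2 * s by lra.
  have := mulr_ge0 p1 p2.
  have -> : h * (3 * h + 2 * s) = 3 * h^+2 + 2 * h * s by ring.
  lra.
Qed.


Lemma aux_h12 (R : realFieldType) (x y : R) : 0 < y -> x <= y -> x <= 1/12 * (48 * y).
Proof. move=> *; lra. Qed.

Lemma aux_nn (R : realFieldType) (a b x y : R) : a^+2 + b^+2 = 1 -> x^+2 + y^+2 < 1 ->
  0 < (a - x)^+2 + (b - y)^+2.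
Proof.
move=> ab xy; rewrite lt_neqAle addr_ge0 ?sqr_ge0 // andbT eq_sym.
apply/negP => /eqP H.
have H1 : (a - x)^+2 = 0.
  apply/eqP; rewrite eq_le sqr_ge0 andbT -H lerDl sqr_ge0 //.
have H2 : (b - y)^+2 = 0.
  apply/eqP; rewrite eq_le sqr_ge0 andbT -H lerDr sqr_ge0 //.
have ex : x = a by apply/eqP; rewrite eq_sym -subr_eq0 -sqrf_eq0 H1.
have ey : y = b by apply/eqP; rewrite eq_sym -subr_eq0 -sqrf_eq0 H2.
by rewrite ex ey ab ltxx in xy.
Qed.

Lemma aux_P (R : realFieldType) (al a b x y : R) : a^+2 + b^+2 = 1 ->
  (a - x)^+2 + (b - y)^+2 != 0 ->
  2 * (al * (x * (a - x) + y * (b - y)) / ((a - x)^+2 + (b - y)^+2)) + al =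
  al * ((1 - (x^+2 + y^+2)) / ((a - x)^+2 + (b - y)^+2)).
Proof.
move=> ab n0; rewrite -{2}ab; field; exact: n0.
Qed.

Lemma aux_Q (R : realFieldType) (al M h r nn : R) : 0 < al -> 0 < h -> 0 < nn ->
  M * h = al / 48 -> r <= 1 - h -> nn <= 12 * h^+2 ->
  2 * M <= al * ((1 - r) / nn).
Proof.
move=> al0 h0 nn0 Mh rh nnh.
have M0 : 0 < M.
  have : 0 < M * h by rewrite Mh divr_gt0.
  by rewrite pmulr_lgt0.
rewrite mulrA ler_pdivlMr //.
have e1 : 2 * M * nn <= 2 * M * (12 * h^+2) by rewrite ler_pM2l // mulr_gt0.
have e2 : 2 * M * (12 * h^+2) = al * h / 2.
  have -> : 2 * M * (12 * h^+2) = 24 * h * (M * h) by ring.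
  by rewrite Mh; field.
have e3 : al * h <= al * (1 - r).
  rewrite ler_pM2l //; lra.
have e4 : 0 < al * h by rewrite mulr_gt0.
lra.
Qed.

Lemma aux_P0 (R : realFieldType) (al r nn : R) : 0 < al -> r < 1 -> 0 < nn ->
  0 <= al * ((1 - r) / nn).
Proof.
move=> al0 r1 nn0; apply: mulr_ge0; first exact: ltW.
apply: divr_ge0; last exact: ltW.
lra.
Qed.

Lemma aux_fin (R : realFieldType) (M s N : R) : 0 <= M -> 1 <= s ->
  2 * M * s <= 2 * N + M -> M / 2 * s <= N.
Proof.
move=> M0 s1 H.
have : M <= M * s by rewrite ler_peMr.
lra.
Qed.

Lemma normc_ge0' (R : rcfType) (v : R[i]) : 0 <= ComplexField.Normc.normc v.
Proof. by case: v => c d /=; rewrite sqrtr_ge0. Qed.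

Lemma normc_le1 (R : rcfType) (x y : R) : x^+2 + y^+2 <= 1 ->
  ComplexField.Normc.normc ((x +i* y)%C : R[i]) <= 1.
Proof. by move=> H /=; rewrite -sqrtr1 ler_wsqrtr. Qed.

Lemma leb_itv (R : realType) (c h : R) : 0 < h ->
  lebesgue_measure (`[c - h, c + h] : set R) = (2 * h)%:E :> \bar R.
Proof.
move=> h0; rewrite lebesgue_measure_itv /= ifT.
  by rewrite -EFinD; congr EFin; ring.
rewrite lte_fin; lra.
Qed.

Local Close Scope classical_set_scope.

Theorem theorem1p2 (R : realType) :
  exists C : R, 0 < C /\
  forall (n : nat) (z : 'I_n -> R[i]) (alpha : 'I_n -> R),
    (forall k, ComplexField.Normc.normc (z k) = 1) ->
    (forall k, 0 < alpha k) ->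
    ((C * ((\sum_(k < n) alpha k ^+ 2) / (\sum_(k < n) alpha k)))%:E
       <= L1_disc_norm_cauchy z alpha)%E.
Proof.
exists (1/1152); split.
  by rewrite divr_gt0 ?ltr01 ?ltr0n.
move=> n z alpha hz ha.
set M := \sum_(k < n) alpha k.
have M0 : 0 <= M by apply: sumr_ge0 => k _; exact: ltW.
have aM k : alpha k <= M.
  by rewrite /M (bigD1 k) //= lerDl; apply: sumr_ge0 => i _; exact: ltW.
have Mpos (k : 'I_n) : 0 < M by exact: lt_le_trans (ha k) (aM k).
pose a k := complex.Re (z k).
pose b k := complex.Im (z k).
have zk k : z k = (a k +i* b k)%C by rewrite /a /b; case: (z k).
have ab k : a k ^+ 2 + b k ^+ 2 = 1.
  have := hz k; rewrite zk /= => e.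
  rewrite -(@sqr_sqrtr _ (a k ^+ 2 + b k ^+ 2)); last by rewrite addr_ge0 // sqr_ge0.
  by rewrite e expr1n.
pose h k := alpha k / (48 * M).
have h0 k : 0 < h k by rewrite /h divr_gt0 // mulr_gt0 // Mpos.
have h12 k : h k <= 1/12.
  rewrite /h ler_pdivrMr ?mulr_gt0 ?(Mpos k) //.
  exact: aux_h12 (Mpos k) (aM k).
have Mh k : M * h k = alpha k / 48.
  rewrite /h; field; exact: lt0r_neq0 (Mpos k).
pose Q k : set (R * R) :=
  (`[(1 - 2 * h k) * a k - h k, (1 - 2 * h k) * a k + h k] `*`
  `[(1 - 2 * h k) * b k - h k, (1 - 2 * h k) * b k + h k])%classic.
have mQ k : measurable (Q k) by apply: measurableX; exact: measurable_itv.
have inQ k p : Q k p -> p.1 ^+ 2 + p.2 ^+ 2 <= 1 - h k /\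
    (a k - p.1) ^+ 2 + (b k - p.2) ^+ 2 <= 12 * h k ^+ 2.
  rewrite /Q /= !in_itv /= => -[] H1 H2.
  exact: geo (ab k) (h0 k) (h12 k) H1 H2.
pose F p := cauchy_atomic z alpha (cplx p).
have core p : p.1 ^+ 2 + p.2 ^+ 2 < 1 ->
    \sum_(k < n) (M / 2 * \1_(Q k) p) <= ComplexField.Normc.normc (F p).
  move=> pD.
  have nn0 k : 0 < (a k - p.1) ^+ 2 + (b k - p.2) ^+ 2 by exact: aux_nn (ab k) pD.
  have eRe : complex.Re (cplx p * F p) = \sum_(k < n)
      alpha k * (p.1 * (a k - p.1) + p.2 * (b k - p.2)) / ((a k - p.1) ^+ 2 + (b k - p.2) ^+ 2).
    rewrite /F /cauchy_atomic mulr_sumr Re_sum; apply: eq_bigr => k _.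
    rewrite zk /cplx; exact: term_Re (lt0r_neq0 (nn0 k)).
  have hRe : complex.Re (cplx p * F p) <= ComplexField.Normc.normc (F p).
    apply: (le_trans (Re_le_normc _ (cplx p * F p))).
    rewrite ComplexField.Normc.normcM; apply: ler_piMl; first exact: normc_ge0'.
    exact: normc_le1 (ltW pD).
  pose P k := alpha k * ((1 - (p.1 ^+ 2 + p.2 ^+ 2)) / ((a k - p.1) ^+ 2 + (b k - p.2) ^+ 2)).
  have eP : 2 * complex.Re (cplx p * F p) + M = \sum_(k < n) P k.
    rewrite eRe mulr_sumr /M -big_split /=; apply: eq_bigr => k _.
    exact: aux_P (ab k) (lt0r_neq0 (nn0 k)).
  have bnd k : 2 * M * \1_(Q k) p <= P k.
    rewrite indicE; case: (boolP (p \in Q k)) => [/set_mem Qp | _].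
      rewrite mulr1; have [i1 i2] := inQ k p Qp.
      exact: aux_Q (ha k) (h0 k) (nn0 k) (Mh k) i1 i2.
    by rewrite mulr0; exact: aux_P0 (ha k) pD (nn0 k).
  have hs : 2 * M * (\sum_(k < n) \1_(Q k) p) <= 2 * ComplexField.Normc.normc (F p) + M.
    rewrite mulr_sumr; apply: le_trans (_ : \sum_(k < n) P k <= _).
      by apply: ler_sum => k _; exact: bnd.
    by rewrite -eP lerD2r ler_pM2l.
  rewrite -mulr_sumr.
  case: (pselect (exists k, Q k p)) => [[k0 Qk0]|nQ].
    apply: aux_fin M0 _ hs.
    rewrite (bigD1 k0) //= indicE mem_set // lerDl.
    by apply: sumr_ge0 => i _; rewrite indicE; case: (_ \in _).
  rewrite big1 ?mulr0 ?normc_ge0' // => k _.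
  rewrite indicE; case: (boolP (p \in Q k)) => // /set_mem Qp.
  by exfalso; apply: nQ; exists k.
rewrite /L1_disc_norm_cauchy integral_mkcond.
pose g k := fun p : R * R => ((M / 2) * \1_(Q k) p)%:E.
have mg k : measurable_fun setT (g k).
  apply/measurable_EFinP; apply: measurable_funM; first exact: measurable_cst.
  exact: measurable_indic.
have g0 k p : (0 <= g k p)%E.
  rewrite /g lee_fin mulr_ge0 ?divr_ge0 //; rewrite indicE; by case: (_ \in _).
apply: (@le_trans _ _ (\int[product_measure1 (@lebesgue_measure R) (@lebesgue_measure R)]_p (\sum_(k < n) g k p))%E).
  rewrite ge0_integral_sum //; try (by move=> k; exact: mg); try (by move=> k p _; exact: g0).
  have ig k : (\int[product_measure1 (@lebesgue_measure R) (@lebesgue_measure R)]_p g k p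
      = ((M / 2) * ((2 * h k) * (2 * h k)))%:E)%E.
    rewrite /g; under eq_integral do rewrite EFinM.
    rewrite ge0_integralZl_EFin //; try (by move=> p _; rewrite lee_fin indicE; case: (_ \in _));
      try (by apply/measurable_EFinP; apply: measurable_indic; exact: mQ k); try (by rewrite divr_ge0).
    rewrite integral_indic; try (by exact: mQ k); try done.
    rewrite setIT /Q.
    have PE := @product_measure1E _ _ _ _ R (@lebesgue_measure R) (@lebesgue_measure R)
      `[(1 - 2 * h k) * a k - h k, (1 - 2 * h k) * a k + h k]
      `[(1 - 2 * h k) * b k - h k, (1 - 2 * h k) * b k + h k]
      (measurable_itv _) (measurable_itv _).
    rewrite [X in (_ * X)%E]PE.
    transitivity ((M / 2)%:E * ((2 * h k)%:E * (2 * h k)%:E))%E.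
      by congr (_ * (_ * _))%E; apply: leb_itv.
    by rewrite -!EFinM.
  rewrite (eq_bigr (fun k => ((M / 2) * ((2 * h k) * (2 * h k)))%:E)); last first.
    by move=> k _; exact: ig k.
  rewrite sumEFin lee_fin.
  rewrite [X in _ <= X](eq_bigr (fun k => 1 / 1152 / M * alpha k ^+ 2)); last first.
    move=> k _; rewrite /h /=; field; exact: lt0r_neq0 (Mpos k).
  rewrite -mulr_sumr.
  set S2 := \sum_(k < n) alpha k ^+ 2.
  by rewrite mulrA [X in _ <= X]mulrAC.
apply: my_le_integral.
- by move=> p; apply: sume_ge0 => k _; exact: g0.
- by apply: emeasurable_sum => k; exact: mg.
move=> p; rewrite patchE /g sumEFin.
case: (boolP (p \in unit_disc (R:=R))) => [/set_mem pD|pnD].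
  by rewrite lee_fin; exact: core.
rewrite lee_fin big1 // => k _.
rewrite indicE; case: (boolP (p \in Q k)) => [/set_mem Qp|]; last by rewrite mulr0.
exfalso; move/negP: pnD; apply; apply/mem_set; rewrite /unit_disc /=.
have [i1 _] := inQ k p Qp; have := h0 k.
by move=> H; apply: (le_lt_trans i1); rewrite ltrBlDr ltrDl.
Qed.
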